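(* Fix an integer $n\ge 1$, real numbers $c_1<c_2<\cdots<c_n$ and a real number $\epsilon$. On $\mathbb{R}^3$ with coordinates $(x,y,z)$ put $\rho=\sqrt{x^2+y^2}$, $r_j=\sqrt{x^2+y^2+(z-c_j)^2}$ and $$V_\epsilon=\frac{\epsilon}{2}+\frac12\sum_{j=1}^n\frac{1}{r_j},\qquad \alpha=-\frac12\sum_{j=1}^n\frac{x\,dy-y\,dx}{r_j\,(r_j-z+c_j)},$$ defined on $U=\mathbb{R}^3\setminus\{(0,0,z): z\ge c_1\}$. On $U\times S^1$, with $\varphi$ the angular coordinate on $S^1$, let $$g_\epsilon=\frac{1}{V_\epsilon}(d\varphi+\alpha)^2+V_\epsilon\,(dx^2+dy^2+dz^2),$$ considered on the open subset $W$ of $U\times S^1$ where $V_\epsilon\ne0$ and $\rho>0$. Let $$z_1=\prod_{j=1}^n\bigl(r_j-(z-c_j)\bigr)^{1/2}\,e^{-\frac{\epsilon}{2}z+\sqrt{-1}\,\varphi},\qquad z_2=x+\sqrt{-1}\,y,$$ and define $\beta_1=z_1$, $\alpha_1=z_2/z_1$ (so $z_1=\beta_1$, $z_2=\alpha_1\beta_1$). Set $S=\sum_{j=1}^n\frac{r_j+z-c_j}{r_j}$. Then on $W$, $$\begin{aligned}g_\epsilon=&\Bigl[V_\epsilon\rho^2+\frac{S^2}{4V_\epsilon}\Bigr]\frac{d\alpha_1}{\alpha_1}\frac{d\bar\alpha_1}{\bar\alpha_1}+\Bigl[V_\epsilon\rho^2-\frac{S}{2V_\epsilon}+\frac{S^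2}{4V_\epsilon}\Bigr]\Bigl(\frac{d\alpha_1}{\alpha_1}\frac{d\bar\beta_1}{\bar\beta_1}+\frac{d\beta_1}{\beta_1}\frac{d\bar\alpha_1}{\bar\alpha_1}\Bigr)\\&+\Bigl[\frac{1}{V_\epsilon}+V_\epsilon\rho^2-\frac{S}{V_\epsilon}+\frac{S^2}{4V_\epsilon}\Bigr]\frac{d\beta_1}{\beta_1}\frac{d\bar\beta_1}{\bar\beta_1}.\end{aligned}$$
   Context: For $\epsilon>0$, $g_\epsilon$ is the (toric) multi-Taub-NUT metric; for $\epsilon=0$ it is the Gibbons–Hawking metric. The functions $z_1,z_2$ (hence $\alpha_1,\beta_1$) are holomorphic for the complex structure whose $(1,0)$-forms are spanned by $dx+\sqrt{-1}\,dy$ and $(d\varphi+\alpha)+\sqrt{-1}\,V_\epsilon\,dz$. A product $ab$ of two (complex) $1$-forms denotes the symmetric product $\tfrac12(a\otimes b+b\otimes a)$, so that e.g. $(dx+\sqrt{-1}dy)(dx-\sqrt{-1}dy)=dx^2+dy^2$; $dx^2$ means $dx\,dx$. *)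

(* Defs.v *)
(* Local coordinates (x,y,z,phi) on U x S^1,
   with phi a real (local) lift of the angular coordinate on S^1. *)
From Stdlib Require Import Reals.
From Coquelicot Require Import Coquelicot.
Open Scope R_scope.

Fixpoint sumR (n : nat) (f : nat -> R) : R :=
  match n with O => 0 | S m => sumR m f + f m end.
Fixpoint prodR (n : nat) (f : nat -> R) : R :=
  match n with O => 1 | S m => prodR m f * f m end.

Definition P4 := (R * R * R * R)%type.

Definition rho (x y : R) : R := sqrt (x ^ 2 + y ^ 2).
Definition rj (c : nat -> R) (j : nat) (x y z : R) : R :=
  sqrt (x ^ 2 + y ^ 2 + (z - c j) ^ 2).

Definition Veps (n : nat) (c : nat -> R) (eps x y z : R) : R :=
  eps / 2 + 1 / 2 * sumR n (fun j => 1 / rj c j x y z).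

Definition alpha_form (n : nat) (c : nat -> R) (x y z vx vy : R) : R :=
  - (1 / 2) * sumR n (fun j =>
       (x * vy - y * vx) / (rj c j x y z * (rj c j x y z - z + c j))).

Definition g_eps (n : nat) (c : nat -> R) (eps : R) (p v w : P4) : R :=
  let '(x, y, z, _) := p in
  let '(vx, vy, vz, vp) := v in
  let '(wx, wy, wz, wp) := w in
  let V := Veps n c eps x y z in
  / V * ((vp + alpha_form n c x y z vx vy) * (wp + alpha_form n c x y z wx wy))
  + V * (vx * wx + vy * wy + vz * wz).

Definition Ssum (n : nat) (c : nat -> R) (x y z : R) : R :=
  sumR n (fun j => (rj c j x y z + z - c j) / rj c j x y z).

Definition zz1 (n : nat) (c : nat -> R) (eps : R) (p : P4) : C :=
  let '(x, y, z, ph) := p in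
  Cmult (RtoC (prodR n (fun j => sqrt (rj c j x y z - (z - c j))) * exp (- (eps / 2) * z)))
        (cos ph, sin ph).
Definition zz2 (p : P4) : C := let '(x, y, _, _) := p in (x, y).

Definition beta1 n c eps (p : P4) : C := zz1 n c eps p.
Definition alpha1 n c eps (p : P4) : C := Cdiv (zz2 p) (zz1 n c eps p).

Definition dC (F : P4 -> C) (p v : P4) : C :=
  let '(x, y, z, ph) := p in
  let '(vx, vy, vz, vp) := v in
  let G t := F (x + t * vx, y + t * vy, z + t * vz, ph + t * vp) in
  (Derive (fun t => Re (G t)) 0, Derive (fun t => Im (G t)) 0).

Definition dlog (F : P4 -> C) (p v : P4) : C := Cdiv (dC F p v) (F p).

(* symmetric product a b = (a (x) b + b (x) a)/2 of complex 1-forms evaluated on (v,w) *)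
Definition symprod (a b : P4 -> C) (v w : P4) : C :=
  Cmult (RtoC (1 / 2)) (Cplus (Cmult (a v) (b w)) (Cmult (b v) (a w))).

Definition cform (a : P4 -> C) : P4 -> C := fun v => Cconj (a v).

(* Main.v *)
Require Import Defs.
From Stdlib Require Import Reals Lra Psatz.
From Coquelicot Require Import Coquelicot.
Open Scope R_scope.


Lemma isd_eq (f : R -> R) x (l lp : R) : is_derive f x l -> @eq R l lp -> is_derive f x lp.
Proof. intros H E; rewrite <- E; exact H. Qed.

Lemma D_mult (f g : R -> R) x df dg : is_derive f x df -> is_derive g x dg ->
  is_derive (fun t => f t * g t) x (df * g x + f x * dg).
Proof. intros Hf Hg. apply (is_derive_mult f g x df dg Hf Hg). intros; apply Rmult_comm. Qed.

Lemma sumR_ext n f g : (forall j, (j < n)%nat -> f j = g j) -> sumR n f = sumR n g.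
Proof. induction n; simpl; intros H; auto. rewrite IHn; [rewrite H|]; auto. Qed.

Lemma sumR_lin n a b f g : sumR n (fun j => a * f j + b * g j) = a * sumR n f + b * sumR n g.
Proof. induction n; simpl; [ring|]. rewrite IHn; ring. Qed.

Lemma sumR_scal n a f : sumR n (fun j => a * f j) = a * sumR n f.
Proof. induction n; simpl; [ring|]. rewrite IHn; ring. Qed.

Lemma Dprod (f : nat -> R -> R) (df f0 : nat -> R) m :
  (forall j, (j < m)%nat -> is_derive (f j) 0 (df j) /\ f j 0 = f0 j /\ f0 j <> 0) ->
  is_derive (fun t => prodR m (fun j => f j t)) 0 (prodR m f0 * sumR m (fun j => df j / f0 j)).
Proof.
  induction m; simpl; intros H.
  - eapply isd_eq. apply (is_derive_const (K:=R_AbsRing) (V:=R_NormedModule)). simpl. unfold zero; simpl. ring.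
  - destruct (H m) as [H1 [H2 H3]]; [lia|].
    assert (IH : is_derive (fun t => prodR m (fun j => f j t)) 0 (prodR m f0 * sumR m (fun j => df j / f0 j))).
    { apply IHm. intros; apply H; lia. }
    eapply isd_eq. apply (D_mult _ _ _ _ _ IH H1).
    assert (prodR m (fun j => f j 0) = prodR m f0).
    { clear -H. induction m; simpl; auto. rewrite IHm. destruct (H m) as [_ [-> _]]; auto. intros; apply H; lia. }
    rewrite H0, H2. field. auto.
Qed.

Lemma alg1 r x y z cj vx vy vz : r <> 0 -> r - (z - cj) <> 0 -> r + (z-cj) <> 0 ->
  x^2+y^2 = (r-(z-cj))*(r+(z-cj)) ->
  ((x*vx+y*vy+(z-cj)*vz)/r - vz) / (2*(r - (z-cj))) =
  (x*vx+y*vy)/(x^2+y^2)/2 * ((r + z - cj)/r) + (-vz/2)*(1/r).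
Proof. intros H1 H2 H3 H4. rewrite H4. field. auto. Qed.

Lemma alg2 r x y z cj vx vy : r <> 0 -> r - (z - cj) <> 0 -> r + (z-cj) <> 0 ->
  x^2+y^2 = (r-(z-cj))*(r+(z-cj)) ->
  (x * vy - y * vx) / (r * (r - z + cj)) = (x*vy - y*vx)/(x^2+y^2) * ((r + z - cj)/r).
Proof. intros H1 H2 H3 H4. rewrite H4. field. repeat split; auto; lra. Qed.

Lemma rfacts c j x y z : x^2+y^2 > 0 ->
  let r := rj c j x y z in
  r > 0 /\ r - (z - c j) > 0 /\ r + (z - c j) > 0 /\ x^2+y^2 = (r-(z-c j))*(r+(z-c j)).
Proof.
  intros H r.
  assert (Hq : 0 <= x ^ 2 + y ^ 2 + (z - c j) ^ 2) by (apply Rplus_le_le_0_compat; [lra | apply pow2_ge_0]).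
  assert (Hr2 : r * r = x ^ 2 + y ^ 2 + (z - c j) ^ 2) by (unfold r, rj; apply sqrt_sqrt; exact Hq).
  assert (Hr0 : 0 <= r) by (unfold r, rj; apply sqrt_pos).
  clearbody r.
  assert (Hz : 0 <= (z - c j) ^ 2) by apply pow2_ge_0.
  assert (r > 0) by nra.
  assert (E : x ^ 2 + y ^ 2 = (r - (z - c j)) * (r + (z - c j))) by nra.
  assert (r - (z - c j) > 0) by nra.
  repeat split; try nra.
Qed.


Lemma Dinner c j x y z vx vy vz : x^2+y^2>0 ->
  is_derive (fun t => rj c j (x+t*vx) (y+t*vy) (z+t*vz) - (z+t*vz - c j)) 0
   ((x*vx+y*vy+(z-c j)*vz)/rj c j x y z - vz).
Proof.
  intros H. pose proof (rfacts c j x y z H) as F; cbv zeta in F.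
  destruct F as [Hr [Hu [Hw E]]].
  assert (Hz : 0 <= (z - c j) ^ 2) by apply pow2_ge_0.
  unfold rj in *. auto_derive.
  - rewrite !Rmult_0_l, !Rplus_0_r. nra.
  - rewrite !Rmult_0_l, !Rplus_0_r, !Rmult_1_r.
    replace (x * x + y * y + (z + - c j) * (z + - c j)) with (x ^ 2 + y ^ 2 + (z - c j) ^ 2) by ring.
    field. lra.
Qed.

Lemma Ds c j x y z vx vy vz : x^2+y^2>0 ->
 is_derive (fun t => sqrt (rj c j (x+t*vx) (y+t*vy) (z+t*vz) - (z+t*vz - c j))) 0
   (sqrt (rj c j x y z - (z - c j)) * ((x*vx+y*vy)/(x^2+y^2)/2 * ((rj c j x y z + z - c j)/rj c j x y z) + (-vz/2)*(1/rj c j x y z))).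
Proof.
  intros H. pose proof (rfacts c j x y z H) as F; cbv zeta in F.
  destruct F as [Hr [Hu [Hw E]]].
  eapply isd_eq.
  { apply is_derive_sqrt. apply Dinner; auto. rewrite !Rmult_0_l, !Rplus_0_r. lra. }
  cbv beta. rewrite !Rmult_0_l, !Rplus_0_r.
  rewrite <- alg1; try lra.
  assert (Hs : sqrt (rj c j x y z - (z - c j)) * sqrt (rj c j x y z - (z - c j)) = rj c j x y z - (z - c j)) by (apply sqrt_sqrt; lra).
  assert (Hs0 : 0 < sqrt (rj c j x y z - (z - c j))) by (apply sqrt_lt_R0; lra).
  set (s := sqrt (rj c j x y z - (z - c j))) in *.
  rewrite <- Hs. field. lra.
Qed.


Definition Pf n c eps x y z vx vy vz t :=
  prodR n (fun j => sqrt (rj c j (x+t*vx) (y+t*vy) (z+t*vz) - (z+t*vz - c j))) * exp (-(eps/2)*(z+t*vz)).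
Definition P0 n c eps x y z :=
  prodR n (fun j => sqrt (rj c j x y z - (z - c j))) * exp (-(eps/2)*z).

Lemma DP n c eps x y z vx vy vz : x^2+y^2>0 ->
  is_derive (Pf n c eps x y z vx vy vz) 0
   (P0 n c eps x y z * (Ssum n c x y z / 2 * ((x*vx+y*vy)/(x^2+y^2)) - Veps n c eps x y z * vz)).
Proof.
  intros H. unfold Pf.
  eapply isd_eq.
  { apply (D_mult (fun t => prodR n (fun j => sqrt (rj c j (x+t*vx) (y+t*vy) (z+t*vz) - (z+t*vz - c j))))
                  (fun t => exp (-(eps/2)*(z+t*vz)))).
    - apply (Dprod (fun j t => sqrt (rj c j (x+t*vx) (y+t*vy) (z+t*vz) - (z+t*vz - c j)))
              (fun j => sqrt (rj c j x y z - (z - c j)) * ((x*vx+y*vy)/(x^2+y^2)/2 * ((rj c j x y z + z - c j)/rj c j x y z) + (-vz/2)*(1/rj c j x y z)))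
              (fun j => sqrt (rj c j x y z - (z - c j)))).
      intros j _. pose proof (rfacts c j x y z H) as F; cbv zeta in F.
      destruct F as [Hr [Hu [Hw E]]].
      split; [apply Ds; auto|split].
      + cbv beta. rewrite !Rmult_0_l, !Rplus_0_r. reflexivity.
      + apply Rgt_not_eq. apply sqrt_lt_R0. lra.
    - auto_derive; auto. }
  cbv beta. rewrite !Rmult_0_l, !Rplus_0_r.
  rewrite (sumR_ext n _ (fun j => (x*vx+y*vy)/(x^2+y^2)/2 * ((rj c j x y z + z - c j)/rj c j x y z) + (-vz/2)*(1/rj c j x y z))).
  2:{ intros j _. pose proof (rfacts c j x y z H) as F; cbv zeta in F.
      destruct F as [Hr [Hu [Hw E]]].
      assert (Hs0 : 0 < sqrt (rj c j x y z - (z - c j))) by (apply sqrt_lt_R0; lra).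
      field. lra. }
  rewrite sumR_lin. unfold P0, Ssum, Veps.

  field. lra.
Qed.


Lemma dC_eq (F : P4 -> C) x y z ph vx vy vz vp (d1 d2 : R) :
 is_derive (fun t => fst (F (x+t*vx, y+t*vy, z+t*vz, ph+t*vp))) 0 d1 ->
 is_derive (fun t => snd (F (x+t*vx, y+t*vy, z+t*vz, ph+t*vp))) 0 d2 ->
 dC F (x,y,z,ph) (vx,vy,vz,vp) = (d1,d2).
Proof.
  intros H1 H2. cbv beta iota zeta delta [dC Re Im].
  f_equal; apply is_derive_unique; assumption.
Qed.

Lemma Cdiv_eq (u w q : C) : w <> RtoC 0 -> u = Cmult q w -> Cdiv u w = q.
Proof. intros H ->. field. exact H. Qed.

Lemma LB1 (P : R -> R) dP ph vp : is_derive P 0 dP ->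
  is_derive (fun t => P t * cos (ph+t*vp) - 0 * sin (ph+t*vp)) 0 (dP * cos ph - P 0 * sin ph * vp).
Proof.
  intros H. auto_derive. exists dP; exact H.
  match goal with |- context [Derive ?f 0] => replace (Derive f 0) with dP by (symmetry; apply is_derive_unique; exact H) end. rewrite Rmult_0_l, Rplus_0_r. ring.
Qed.

Lemma LB2 (P : R -> R) dP ph vp : is_derive P 0 dP ->
  is_derive (fun t => P t * sin (ph+t*vp) + 0 * cos (ph+t*vp)) 0 (dP * sin ph + P 0 * cos ph * vp).
Proof.
  intros H. auto_derive. exists dP; exact H.
  match goal with |- context [Derive ?f 0] => replace (Derive f 0) with dP by (symmetry; apply is_derive_unique; exact H) end. rewrite Rmult_0_l, Rplus_0_r. ring.
Qed.

Lemma LA1 (P : R -> R) dP x y vx vy ph vp : is_derive P 0 dP -> P 0 <> 0 ->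
  is_derive (fun t => ((x+t*vx) * cos (ph+t*vp) + (y+t*vy) * sin (ph+t*vp)) * / P t) 0
   (((vx * cos ph - x * sin ph * vp + vy * sin ph + y * cos ph * vp) - (x * cos ph + y * sin ph) * dP / P 0) / P 0).
Proof.
  intros H H0. auto_derive. split; [exists dP; exact H| split; auto].
  match goal with |- context [Derive ?f 0] => replace (Derive f 0) with dP by (symmetry; apply is_derive_unique; exact H) end. rewrite !Rmult_0_l, !Rplus_0_r. field. auto.
Qed.

Lemma LA2 (P : R -> R) dP x y vx vy ph vp : is_derive P 0 dP -> P 0 <> 0 ->
  is_derive (fun t => ((y+t*vy) * cos (ph+t*vp) - (x+t*vx) * sin (ph+t*vp)) * / P t) 0
   (((vy * cos ph - y * sin ph * vp - vx * sin ph - x * cos ph * vp) - (y * cos ph - x * sin ph) * dP / P 0) / P 0).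
Proof.
  intros H H0. auto_derive. split; [exists dP; exact H| split; auto].
  match goal with |- context [Derive ?f 0] => replace (Derive f 0) with dP by (symmetry; apply is_derive_unique; exact H) end. rewrite !Rmult_0_l, !Rplus_0_r. field. auto.
Qed.

Lemma LA_pt X Y Pv f :
  Cdiv (X,Y) (Cmult (RtoC Pv) (cos f, sin f)) = ((X * cos f + Y * sin f) * / Pv, (Y * cos f - X * sin f) * / Pv).
Proof.
  assert (Hd : (Pv * cos f - 0 * sin f) ^ 2 + (Pv * sin f + 0 * cos f) ^ 2 = Pv ^ 2).
  { pose proof (sin2_cos2 f). unfold Rsqr in H. nra. }
  unfold Cdiv, Cinv, Cmult, RtoC. cbn [fst snd].
  rewrite Hd.
  destruct (Req_dec Pv 0) as [E|E].
  - subst. replace (0 ^ 2) with 0 by ring. rewrite Rinv_0.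
    unfold Rdiv. rewrite Rinv_0. apply injective_projections; cbn [fst snd]; ring.
  - apply injective_projections; cbn [fst snd]; field; auto.
Qed.

Lemma prodR_pos n f : (forall j, (j < n)%nat -> 0 < f j) -> 0 < prodR n f.
Proof. induction n; simpl; intros H; [lra|]. apply Rmult_lt_0_compat; [apply IHn|apply H]; auto. Qed.

Lemma P0_pos n c eps x y z : x^2+y^2>0 -> 0 < P0 n c eps x y z.
Proof.
  intros H. unfold P0. apply Rmult_lt_0_compat; [|apply exp_pos].
  apply prodR_pos. intros j _. pose proof (rfacts c j x y z H) as F; cbv zeta in F.
  apply sqrt_lt_R0. lra.
Qed.

Lemma Pf0 n c eps x y z vx vy vz : Pf n c eps x y z vx vy vz 0 = P0 n c eps x y z.
Proof. unfold Pf, P0. rewrite !Rmult_0_l, !Rplus_0_r. reflexivity. Qed.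

Lemma dlogB n c eps x y z ph vx vy vz vp : x^2+y^2>0 ->
 dlog (beta1 n c eps) (x,y,z,ph) (vx,vy,vz,vp) =
 (Ssum n c x y z / 2 * ((x*vx+y*vy)/(x^2+y^2)) - Veps n c eps x y z * vz, vp).
Proof.
  intros H. unfold dlog.
  pose proof (DP n c eps x y z vx vy vz H) as HD.
  pose proof (P0_pos n c eps x y z H) as Hp.
  pose proof (Pf0 n c eps x y z vx vy vz) as E0.
  assert (H1 : is_derive (fun t => fst (beta1 n c eps (x+t*vx, y+t*vy, z+t*vz, ph+t*vp))) 0
     (P0 n c eps x y z * (Ssum n c x y z / 2 * ((x*vx+y*vy)/(x^2+y^2)) - Veps n c eps x y z * vz) * cos ph
       - Pf n c eps x y z vx vy vz 0 * sin ph * vp)).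
  { eapply is_derive_ext; [|apply (LB1 _ _ ph vp HD)]. intros t; reflexivity. }
  assert (H2 : is_derive (fun t => snd (beta1 n c eps (x+t*vx, y+t*vy, z+t*vz, ph+t*vp))) 0
     (P0 n c eps x y z * (Ssum n c x y z / 2 * ((x*vx+y*vy)/(x^2+y^2)) - Veps n c eps x y z * vz) * sin ph
       + Pf n c eps x y z vx vy vz 0 * cos ph * vp)).
  { eapply is_derive_ext; [|apply (LB2 _ _ ph vp HD)]. intros t; reflexivity. }
  rewrite (dC_eq _ x y z ph vx vy vz vp _ _ H1 H2).
  rewrite E0.
  apply Cdiv_eq.
  - change (beta1 n c eps (x, y, z, ph)) with (Cmult (RtoC (P0 n c eps x y z)) (cos ph, sin ph)).
    intro E. pose proof (f_equal fst E) as E1. pose proof (f_equal snd E) as E2.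
    cbn [fst snd Cmult RtoC] in E1, E2. pose proof (sin2_cos2 ph). unfold Rsqr in *. nra.
  - change (beta1 n c eps (x, y, z, ph)) with (Cmult (RtoC (P0 n c eps x y z)) (cos ph, sin ph)).
    apply injective_projections; cbn [fst snd Cmult RtoC]; ring.
Qed.


Lemma dlogA n c eps x y z ph vx vy vz vp : x^2+y^2>0 ->
 dlog (alpha1 n c eps) (x,y,z,ph) (vx,vy,vz,vp) =
 ((x*vx+y*vy)/(x^2+y^2) - (Ssum n c x y z / 2 * ((x*vx+y*vy)/(x^2+y^2)) - Veps n c eps x y z * vz),
  (x*vy-y*vx)/(x^2+y^2) - vp).
Proof.
  intros H. unfold dlog.
  pose proof (DP n c eps x y z vx vy vz H) as HD.
  pose proof (P0_pos n c eps x y z H) as Hp.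
  pose proof (Pf0 n c eps x y z vx vy vz) as E0.
  assert (Hn : Pf n c eps x y z vx vy vz 0 <> 0) by lra.
  set (l := Ssum n c x y z / 2 * ((x*vx+y*vy)/(x^2+y^2)) - Veps n c eps x y z * vz) in *.
  assert (H1 : is_derive (fun t => fst (alpha1 n c eps (x+t*vx, y+t*vy, z+t*vz, ph+t*vp))) 0
    (((vx * cos ph - x * sin ph * vp + vy * sin ph + y * cos ph * vp) - (x * cos ph + y * sin ph) * (P0 n c eps x y z * l) / Pf n c eps x y z vx vy vz 0) / Pf n c eps x y z vx vy vz 0)).
  { eapply is_derive_ext; [|apply (LA1 _ _ x y vx vy ph vp HD Hn)]. intros t.
    unfold alpha1, zz1, zz2. rewrite LA_pt. reflexivity. }
  assert (H2 : is_derive (fun t => snd (alpha1 n c eps (x+t*vx, y+t*vy, z+t*vz, ph+t*vp))) 0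
    (((vy * cos ph - y * sin ph * vp - vx * sin ph - x * cos ph * vp) - (y * cos ph - x * sin ph) * (P0 n c eps x y z * l) / Pf n c eps x y z vx vy vz 0) / Pf n c eps x y z vx vy vz 0)).
  { eapply is_derive_ext; [|apply (LA2 _ _ x y vx vy ph vp HD Hn)]. intros t.
    unfold alpha1, zz1, zz2. rewrite LA_pt. reflexivity. }
  rewrite (dC_eq _ x y z ph vx vy vz vp _ _ H1 H2).
  rewrite E0.
  assert (Ea : alpha1 n c eps (x, y, z, ph) = ((x * cos ph + y * sin ph) * / P0 n c eps x y z, (y * cos ph - x * sin ph) * / P0 n c eps x y z)).
  { unfold alpha1, zz1, zz2. rewrite LA_pt. reflexivity. }
  rewrite Ea. clearbody l.
  apply Cdiv_eq.
  - intro E. pose proof (f_equal fst E) as F1. pose proof (f_equal snd E) as F2.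
    cbn [fst snd RtoC] in F1, F2.
    assert (G1 : x * cos ph + y * sin ph = 0).
    { apply (Rmult_eq_reg_r (/ P0 n c eps x y z)); [rewrite F1; ring | apply Rinv_neq_0_compat; lra]. }
    assert (G2 : y * cos ph - x * sin ph = 0).
    { apply (Rmult_eq_reg_r (/ P0 n c eps x y z)); [rewrite F2; ring | apply Rinv_neq_0_compat; lra]. }
    pose proof (sin2_cos2 ph). unfold Rsqr in *.
    assert ((x * cos ph + y * sin ph)^2 + (y * cos ph - x * sin ph)^2 = x^2+y^2) by nra.
    rewrite G1, G2 in H3. lra.
  - apply injective_projections; cbn [fst snd Cmult]; field; lra.
Qed.

Lemma alphaF n c x y z vx vy : x^2+y^2>0 ->
  alpha_form n c x y z vx vy = - (Ssum n c x y z / 2) * ((x*vy-y*vx)/(x^2+y^2)).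
Proof.
  intros H. unfold alpha_form, Ssum.
  rewrite (sumR_ext n _ (fun j => (x*vy-y*vx)/(x^2+y^2) * ((rj c j x y z + z - c j)/rj c j x y z))).
  2:{ intros j _. pose proof (rfacts c j x y z H) as F; cbv zeta in F.
      destruct F as [Hr [Hu [Hw E]]]. apply alg2; lra. }
  rewrite sumR_scal. field. lra.
Qed.


Theorem mainTheorem2 (n : nat) (c : nat -> R) (eps : R) :
  (1 <= n)%nat ->
  (forall i j : nat, (i < j)%nat -> (j < n)%nat -> c i < c j) ->
  forall x y z ph : R,
  let p : P4 := (x, y, z, ph) in
  0 < rho x y ->
  Veps n c eps x y z <> 0 ->
  forall v w : P4,
  let V := Veps n c eps x y z in
  let S := Ssum n c x y z in
  let A := dlog (alpha1 n c eps) p in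
  let B := dlog (beta1 n c eps) p in
  RtoC (g_eps n c eps p v w) =
  Cplus (Cplus
    (Cmult (RtoC (V * rho x y ^ 2 + S ^ 2 / (4 * V))) (symprod A (cform A) v w))
    (Cmult (RtoC (V * rho x y ^ 2 - S / (2 * V) + S ^ 2 / (4 * V)))
           (Cplus (symprod A (cform B) v w) (symprod B (cform A) v w))))
    (Cmult (RtoC (1 / V + V * rho x y ^ 2 - S / V + S ^ 2 / (4 * V)))
           (symprod B (cform B) v w)).
Proof.
  intros _ _ x y z ph p Hrho HV [[[vx vy] vz] vp] [[[wx wy] wz] wp] V S A B.
  assert (H : x ^ 2 + y ^ 2 > 0).
  { destruct (Rlt_or_le 0 (x^2+y^2)) as [h|h]; auto.
    assert (h0 : x^2+y^2 = 0) by nra. unfold rho in Hrho. rewrite h0, sqrt_0 in Hrho. lra. }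
  unfold symprod, cform, A, B, p.
  rewrite !dlogA, !dlogB by auto.
  unfold g_eps. cbv beta iota zeta.
  rewrite !alphaF by auto.
  unfold rho. rewrite pow2_sqrt by lra.
  fold V S.
  apply injective_projections; cbn [fst snd Cmult Cplus Cconj RtoC]; field; (split; [lra | exact HV]).
Qed.
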